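(* Let $p$ be a prime, $\alpha\in\mathbb{N}$, $r\in\mathbb{Z}$, and let $f(x)\in\mathbb{Z}_p[x]$ with $\deg f=l\in\mathbb{N}$. Then there is a sequence $(a_k)_{k\in\mathbb{N}}$ of $p$-adic integers such that for every $n\in\mathbb{N}$, $$\sum_{k=0}^n\binom nk(-1)^k\Big\lfloor\frac k{p^{\alpha-1}}\Big\rfloor!\binom{\{r\}_{p^{\alpha-1}}+\{k-r\}_{p^{\alpha-1}}}{\{r\}_{p^{\alpha-1}}}a_k=\begin{cases}p^lf\big(\frac{n-r}{p^{\alpha}}\big)&\text{if } n\equiv r\pmod{p^{\alpha}},\\ 0&\text{otherwise}.\end{cases}$$
   Context: For an integer $a$ and positive real $m$, $\{a\}_m$ is the unique number in $[0,m)$ with $a-\{a\}_m\in m\mathbb{Z}$ (so $\{a\}_{p^{-1}}=0$). When $\alpha=0$, $\lfloor k/p^{-1}\rfloor=pk$. $\mathbb{Z}_p$ denotes the $p$-adic integers. *)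

(* Defs.v *)
From mathcomp Require Import all_boot all_order all_algebra.
Set Implicit Arguments. Unset Strict Implicit. Unset Printing Implicit Defensive.
Import Order.TTheory GRing.Theory Num.Theory.
Local Open Scope ring_scope.

(* p-adic integers Z_p, modelled as coherent sequences of integers
   (x_m)_m with x_{m+1} = x_m (mod p^m); x represents lim x_m.
   Two such sequences denote the same p-adic integer iff x_m = y_m mod p^m
   for all m, so an identity in Z_p is stated as a congruence mod p^m
   for every precision m. *)
Record padic (p : nat) := Padic {
  pseq : nat -> int;
  pcoh : forall m : nat, (pseq m.+1 = pseq m %[mod (p ^ m)%N%:Z])%Z }.

Definition padic_is0 (p : nat) (x : padic p) : Prop :=
  forall m : nat, (pseq x m = 0 %[mod (p ^ m)%N%:Z])%Z.

(* floor(k / p^(alpha-1)), with the convention floor(k/p^{-1}) = p k *)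
Definition floorp (p alpha k : nat) : nat :=
  if alpha is a.+1 then (k %/ p ^ a)%N else (p * k)%N.

(* {a}_{p^(alpha-1)}, with the convention {a}_{p^{-1}} = 0 *)
Definition fracp (p alpha : nat) (a : int) : nat :=
  if alpha is a'.+1 then `|(a %% (p ^ a')%N%:Z)%Z|%N else 0%N.

Definition coefk (p alpha : nat) (r : int) (n k : nat) : int :=
  ('C(n, k))%:Z * (-1) ^+ k * ((floorp p alpha k)`!)%:Z
  * ('C(fracp p alpha r + fracp p alpha (k%:Z - r), fracp p alpha r))%:Z.

(* Main.v *)
Require Import Defs.
From mathcomp Require Import all_boot all_order all_algebra.
From mathcomp Require Import ring lra zify.
From mathcomp Require Import cyclic.
Set Implicit Arguments. Unset Strict Implicit. Unset Printing Implicit Defensive.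
Import Order.TTheory GRing.Theory Num.Theory.
Local Open Scope ring_scope.

Definition Dk (g : nat -> int) (k : nat) : int :=
  \sum_(j < k.+1) ('C(k, j))%:Z * (-1) ^+ j * g j.

Lemma bump0 i : bump 0 i = i.+1.
Proof. by rewrite /bump leq0n add1n. Qed.

Lemma pascal_split (h : nat -> int) n :
  \sum_(k < n.+2) ('C(n.+1,k))%:Z * h k =
  \sum_(k < n.+1) ('C(n,k))%:Z * h k + \sum_(k < n.+1) ('C(n,k))%:Z * h k.+1.
Proof.
rewrite big_ord_recl bin0 mul1r.
under eq_bigr => i _ do rewrite lift0 binS PoszD mulrDl.
rewrite big_split /= addrA; congr (_ + _).
rewrite [in RHS]big_ord_recl bin0 mul1r; congr (_ + _).
rewrite big_ord_recr /= bin_small // mul0r addr0.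
by apply: eq_bigr => i _ /=; rewrite bump0.
Qed.

Lemma Dk_succ g k : Dk g k.+1 = Dk g k - Dk (fun j => g j.+1) k.
Proof.
rewrite /Dk; under eq_bigr => i _ do rewrite -mulrA.
have /= -> := pascal_split (fun j => (-1) ^+ j * g j) k.
under eq_bigr => i _ do rewrite mulrA.
congr (_ + _).
rewrite -sumrN; apply: eq_bigr => i _.
by rewrite exprS !mulrA mulrN1 !mulNr.
Qed.

Lemma Dk_ext g h k : (forall n, (n <= k)%N -> g n = h n) -> Dk g k = Dk h k.
Proof.
by move=> H; apply: eq_bigr => i _; rewrite H // -ltnS.
Qed.

Lemma inversion (g : nat -> int) n :
  \sum_(k < n.+1) ('C(n,k))%:Z * (-1) ^+ k * Dk g k = g n.
Proof.
elim: n g => [|n IH] g.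
  by rewrite big_ord1 /Dk big_ord1 /= !mul1r.
under eq_bigr => i _ do rewrite -mulrA.
have /= -> := pascal_split (fun k => (-1) ^+ k * Dk g k) n.
under eq_bigr => i _ do rewrite mulrA.
rewrite IH.
under eq_bigr => i _ do rewrite Dk_succ exprS mulN1r mulNr mulrBr opprB mulrBr !mulrA.
rewrite sumrB IH.
rewrite IH.
by rewrite addrC subrK.
Qed.

Definition T (a : int) (N k : nat) : int :=
  \sum_(j < k.+1) ('C(k, j))%:Z * (-1) ^+ j * (a + j%:Z) ^+ N.

Lemma T_rec a N k : T a N.+1 k.+1 = a * T a N k.+1 - (k.+1)%:Z * T (a+1) N k.
Proof.
rewrite /T.
under eq_bigr => i _ do rewrite exprSr mulrDr mulrDr.
rewrite big_split /= mulr_sumr; congr (_ + _).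
  by apply: eq_bigr => i _; ring.
rewrite big_ord_recl /= mulr0 add0r mulr_sumr -sumrN.
apply: eq_bigr => i _; rewrite /= bump0.
have E : ('C(k.+1, i.+1))%:Z * (i.+1)%:Z = (k.+1)%:Z * ('C(k, i))%:Z.
  by rewrite -!PoszM mulnC -mul_bin_diag.
have Ei : (i.+1)%:Z = 1 + i%:Z by rewrite -add1n PoszD.
transitivity (('C(k.+1, i.+1))%:Z * (i.+1)%:Z * (- (-1) ^+ i) * (a + 1 + i%:Z) ^+ N).
  by rewrite exprS Ei addrA; set X := _ ^+ N; ring.
by rewrite E; set X := _ ^+ N; ring.
Qed.

Lemma sum_alt k : \sum_(j < k.+1) ('C(k, j))%:Z * (-1) ^+ j = (k == 0%N)%:Z.
Proof.
have := exprD1n (-1 : int) k; rewrite addNr.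
under eq_bigr => i _ do rewrite -mulr_natr mulrC natz.
move=> <-; case: k => [|k]; first by rewrite expr0.
by rewrite expr0n.
Qed.

Lemma T_prop N : forall a k,
  ((k`!)%:Z %| T a N k)%Z /\ ((N < k)%N -> T a N k = 0).
Proof.
elim: N => [|N IH] a k.
  rewrite /T; under eq_bigr => i _ do rewrite expr0 mulr1.
  rewrite sum_alt; case: k => [|k]; first by rewrite fact0 dvd1z.
  by rewrite /= dvdz0.
case: k => [|k].
  by rewrite fact0 dvd1z.
rewrite T_rec; have [H1 H2] := IH a k.+1; have [H3 H4] := IH (a+1) k.
split.
  apply: rpredB; first exact: dvdz_mull.
  by rewrite factS PoszM; apply: dvdz_mul.
by move=> lt; rewrite H2 ?H4 // ?mulr0 ?subr0 //; lia.
Qed.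

Lemma Dk_poly (G : {poly int}) k :
  Dk (fun n => G.[n%:Z]) k = \sum_(i < size G) G`_i * T 0 i k.
Proof.
rewrite /Dk /T.
under eq_bigr => j _ do rewrite horner_coef mulr_sumr.
rewrite exchange_big /=; apply: eq_bigr => i _.
rewrite mulr_sumr; apply: eq_bigr => j _.
by rewrite add0r; ring.
Qed.

Lemma poly_dvd (G : {poly int}) k : ((k`!)%:Z %| Dk (fun n => G.[n%:Z]) k)%Z.
Proof.
rewrite Dk_poly; apply: rpred_sum => i _; apply: dvdz_mull.
by have [] := T_prop i 0 k.
Qed.

Lemma poly_zero (G : {poly int}) k :
  (size G <= k)%N -> Dk (fun n => G.[n%:Z]) k = 0.
Proof.
move=> H; rewrite Dk_poly big1 // => i _.
have [_ ->] := T_prop i 0 k; first by rewrite mulr0.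
exact: leq_trans (ltn_ord i) H.
Qed.

Lemma PoszX (n m : nat) : ((n ^ m)%N)%:Z = n%:Z ^+ m.
Proof. by rewrite -!natz natrX. Qed.

Lemma Dk_congr g h k M : (forall n, (n <= k)%N -> (g n = h n %[mod M])%Z) ->
  (Dk g k = Dk h k %[mod M])%Z.
Proof.
move=> H; apply/eqP; rewrite eqz_mod_dvd /Dk -sumrB; apply: rpred_sum => i _.
rewrite -mulrBr; apply: dvdz_mull; rewrite -eqz_mod_dvd; apply/eqP; apply: H.
by rewrite -ltnS.
Qed.

Lemma FL p (G : {poly int}) d k : prime p -> (d < p)%N ->
  (((p ^ logn p k`!)%N)%:Z %| Dk (fun n => if (n %% p == d)%N then G.[n%:Z] else 0) k)%Z.
Proof.
move=> pp dp.
set e := logn p k`!; set N := totient (p ^ e).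
set H := G * (1 - ('X + ((p - d)%N)%:Z%:P) ^+ N).
have eN : (e <= N)%N.
  rewrite /N; case: (posnP e) => [->|e0] //.
  rewrite totient_pfactor //; have p1 := prime_gt1 pp.
  have := ltn_expl (e.-1) p1; have : (0 < p.-1)%N by lia.
  by move=> h1 h2; apply: leq_trans (leq_pmull _ h1); lia.
have cong : forall n : nat, ((if (n %% p == d)%N then G.[n%:Z] else 0) = H.[n%:Z] %[mod (p ^ e)%N%:Z])%Z.
  move=> n; rewrite /H !hornerE -PoszD -PoszX.
  set y := (n + (p - d))%N.
  case: ifP => nd.
    have py : (p %| y)%N.
      by rewrite /dvdn /y -modnDml (eqP nd) subnKC ?modnn // ltnW.
    have : ((p ^ e)%N %| (y ^ N)%N)%N.
      apply: dvdn_trans (dvdn_exp2l p eN) _; exact: dvdn_exp2r.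
    move/dvdnP=> [u ->]; rewrite PoszM.
    apply/esym; rewrite mulrBr mulr1 mulrA addrC -mulNr; exact: modzMDl.
  have cy : coprime y (p ^ e).
    rewrite coprime_sym; apply: coprimeXl; rewrite prime_coprime //.
    have cp : (n %% p < p)%N by rewrite ltn_mod prime_gt0.
    move/negbT: nd; move: cp; rewrite /dvdn /y -modnDml.
    set c := (n %% p)%N => cp nd.
    case: (leqP d c) => dc.
      have -> : (c + (p - d) = (c - d) + p)%N by lia.
      rewrite modnDr modn_small; lia.
    rewrite modn_small; lia.
  have := Euler_exp_totient cy; rewrite -/N.
  have y1 : (1 <= y ^ N)%N by rewrite expn_gt0 /y; lia.
  move/eqP; rewrite eqn_mod_dvd // => /dvdnP [v hv].
  have -> : (y ^ N = v * p ^ e + 1)%N by lia.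
  rewrite PoszD PoszM.
  have -> : G.[n%:Z] * (1 - (v%:Z * (p ^ e)%N%:Z + 1)) = (- (G.[n%:Z] * v%:Z)) * (p ^ e)%N%:Z by ring.
  by rewrite modzMl mod0z.
have hc := @Dk_congr (fun n => if (n %% p == d)%N then G.[n%:Z] else 0)
   (fun n => H.[n%:Z]) k ((p ^ e)%N%:Z) (fun n _ => cong n).
have hd : (((p ^ e)%N)%:Z %| Dk (fun n => H.[n%:Z]) k)%Z.
  apply: dvdz_trans (poly_dvd H k); exact: pfactor_dvdnn.
apply/dvdz_mod0P; rewrite hc; exact/dvdz_mod0P.
Qed.

Definition V p n : nat := logn p n`!.

Lemma sum_ext_range p n M : prime p -> (n.+1 <= M)%N ->
  (\sum_(1 <= k < M) n %/ p ^ k = \sum_(1 <= k < n.+1) n %/ p ^ k)%N.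
Proof.
move=> pp nM; rewrite (big_cat_nat _ (n:=n.+1)) //= [X in (_ + X)%N]big1_seq ?addn0 //.
move=> k /andP [_]; rewrite mem_index_iota => /andP [nk _].
rewrite divn_small //; apply: leq_trans (ltn_expl n (prime_gt1 pp)) _.
by rewrite leq_exp2l ?prime_gt1 //; lia.
Qed.

Lemma V_rec p n : prime p -> V p n = (n %/ p + V p (n %/ p))%N.
Proof.
move=> pp; rewrite /V !logn_fact //.
rewrite -(sum_ext_range (M := n.+2) pp) //.
rewrite -(sum_ext_range (n := (n %/ p)) (M := n.+1) pp); last by rewrite ltnS leq_div.
rewrite big_nat_recl // expn1; congr (_ + _)%N.
by apply: eq_bigr => i _; rewrite expnS divnMA.
Qed.

Lemma V0 p : V p 0 = 0%N.
Proof. by rewrite /V fact0 logn1. Qed.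

Fixpoint Fp (p b : nat) (x : int) : int :=
  if b is b'.+1 then (x %/ p)%Z + Fp p b' (x %/ p)%Z else 0.

Lemma divz_mono (p : nat) (x y : int) : (0 < p)%N -> x <= y -> (x %/ p)%Z <= (y %/ p)%Z.
Proof.
move=> p0 xy; rewrite lez_divRL ?ltz_nat //.
apply: le_trans xy; apply: lez_floor; by rewrite eqz_nat -lt0n.
Qed.

Lemma Fp_mono p b x y : (0 < p)%N -> x <= y -> Fp p b x <= Fp p b y.
Proof.
elim: b x y => [|b IH] x y p0 xy //=.
apply: lerD; first exact: divz_mono.
by apply: IH => //; apply: divz_mono.
Qed.

Definition Ee p b (s k : nat) : int := (V p k)%:Z - (V p s)%:Z - Fp p b (k%:Z - s%:Z).

Lemma lemmaB p b s d j k : prime p -> (d < p)%N -> (p * j + d <= k)%N ->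
  Ee p b.+1 (d + p * s) k <= Ee p b s j + (V p k)%:Z - j%:Z - (V p j)%:Z.
Proof.
move=> pp dp jk; have p0 := prime_gt0 pp.
have Vr : V p (d + p * s) = (s + V p s)%N.
  rewrite V_rec // (_ : (d + p * s) %/ p = s)%N //.
  by rewrite mulnC divnDMl // divn_small.
rewrite /Ee Vr /=.
set K := ((k%:Z - d%:Z) %/ p)%Z.
have eK : ((k%:Z - (d + p * s)%N%:Z) %/ p)%Z = K - s%:Z.
  rewrite /K PoszD PoszM (_ : k%:Z - (d%:Z + p%:Z * s%:Z) = (- s%:Z) * p%:Z + (k%:Z - d%:Z)); last by ring.
  by rewrite divzMDl ?eqz_nat -?lt0n // addrC.
rewrite eK.
have jK : j%:Z <= K.
  rewrite /K lez_divRL ?ltz_nat //; nia.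
have := Fp_mono b p0 (lerB jK (lexx s%:Z)).
rewrite PoszD; lra.
Qed.

Definition InS p b s (g : nat -> int) :=
  forall k (t : nat), t%:Z <= Ee p b s k -> (((p ^ t)%N)%:Z %| Dk g k)%Z.

Definition DP p d (G : nat -> int) (n : nat) : int :=
  if (n %% p == d)%N then G (n %/ p)%N else 0.

Lemma Dk_scale c g k : Dk (fun n => c * g n) k = c * Dk g k.
Proof. by rewrite /Dk mulr_sumr; apply: eq_bigr => i _; ring. Qed.

Lemma Dk_lin_sum (K : nat) (c : nat -> int) (h : nat -> nat -> int) k :
  Dk (fun n => \sum_(j < K) c j * h j n) k = \sum_(j < K) c j * Dk (h j) k.
Proof.
rewrite /Dk; under eq_bigr => i _ do rewrite mulr_sumr.
rewrite exchange_big /=; apply: eq_bigr => j _; rewrite mulr_sumr.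
by apply: eq_bigr => i _; ring.
Qed.

Lemma Dk0 k : Dk (fun _ => 0) k = 0.
Proof. by rewrite /Dk big1 // => i _; rewrite mulr0. Qed.

Lemma widen_bin (F : nat -> int) m k : (m <= k)%N ->
  \sum_(j < m.+1) ('C(m, j))%:Z * F j = \sum_(j < k.+1) ('C(m, j))%:Z * F j.
Proof.
move=> mk; rewrite (big_ord_widen _ (fun j => ('C(m, j))%:Z * F j) (_ : m.+1 <= k.+1)%N) //.
rewrite big_mkcond; apply: eq_bigr => j _; case: ifP => // /negbT.
by rewrite -leqNgt => H; rewrite bin_small // mul0r.
Qed.

Lemma cancel_fact p a j t X : prime p ->
  (((p ^ a)%N)%:Z %| ((p ^ j * j`!)%N)%:Z * X)%Z -> (t + j + V p j <= a)%N ->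
  (((p ^ t)%N)%:Z %| X)%Z.
Proof.
move=> pp H ta.
have [m cm em] := pfactor_coprime pp (fact_gt0 j).
move: H; rewrite em -/(V p j) mulnA mulnC mulnA -expnD => H.
have H2 : (((p ^ t)%N)%:Z * ((p ^ (V p j + j))%N)%:Z %| ((p ^ (V p j + j))%N)%:Z * (m%:Z * X))%Z.
  apply: (@dvdz_trans ((p ^ a)%N%:Z)).
    rewrite -PoszM -expnD dvdzE /= dvdn_exp2l //; lia.
  by rewrite mulrA -PoszM.
rewrite [X in (X %| _)%Z]mulrC dvdz_mul2l in H2; last by rewrite eqz_nat -lt0n expn_gt0 prime_gt0.
rewrite Gauss_dvdzr // in H2.
by rewrite coprimezE /= coprimeXl.
Qed.

Lemma prod_ffact p d n j : (n %% p == d)%N ->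
  ((p ^ j * j`! * 'C(n %/ p, j))%N)%:Z = \prod_(i < j) (n%:Z - ((d + p * i)%N)%:Z).
Proof.
move=> /eqP nd; set m := (n %/ p)%N.
have en : n = (m * p + d)%N by rewrite /m -nd -divn_eq.
rewrite -mulnA [(j`! * _)%N]mulnC bin_ffact.
elim: j => [|j IH]; first by rewrite big_ord0 ffactn0 expn0.
rewrite big_ord_recr /= -IH ffactnSr expnS.
case: (leqP j m) => jm.
  rewrite !PoszM -subzn // en.
  have -> : ((m * p + d)%N%:Z - (d + p * j)%N%:Z) = p%:Z * (m%:Z - j%:Z).
    rewrite !PoszD !PoszM; ring.
  ring.
by rewrite ffact_small // !(mul0n, muln0) mul0r.
Qed.

Lemma step p b s d G : prime p -> (d < p)%N -> InS p b s G ->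
  InS p b.+1 (d + p * s) (DP p d G).
Proof.
move=> pp dp HG k t ht.
set h := fun j n => if (n %% p == d)%N then ('C(n %/ p, j))%:Z else 0.
have E1 : Dk (DP p d G) k = \sum_(j < k.+1) ((-1) ^+ j * Dk G j) * Dk (h j) k.
  rewrite -(Dk_lin_sum k.+1 (fun j => (-1) ^+ j * Dk G j) h k); apply: Dk_ext => n nk; rewrite /DP /h.
  case: ifP => _.
    rewrite -{1}(inversion G (n %/ p)).
    under eq_bigr => j _ do rewrite -mulrA.
    rewrite (widen_bin (fun j => (-1) ^+ j * Dk G j) (leq_trans (leq_div n p) nk)).
    by apply: eq_bigr => j _; ring.
  by rewrite big1 // => j _; rewrite mulr0.
rewrite E1; apply: rpred_sum => j _.
case: (ltnP k (p * j + d)) => hj.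
  rewrite (@Dk_ext (h j) (fun _ => 0)) ?Dk0 ?mulr0 ?dvdz0 // => n nk.
  rewrite /h; case: ifP => // /eqP nd; rewrite bin_small //.
  have en : n = (n %/ p * p + d)%N by rewrite -nd -divn_eq.
  move: en; set q := (n %/ p)%N => en.
  have h1 : (q * p < j * p)%N by lia.
  rewrite ltn_pmul2r ?prime_gt0 // in h1; lia.
have A : (((p ^ V p k)%N)%:Z %| ((p ^ j * j`!)%N)%:Z * Dk (h j) k)%Z.
  rewrite -Dk_scale.
  have := FL (\prod_(i < j) ('X - ((d + p * i)%N)%:Z%:P)) k pp dp.
  rewrite -/(V p k) (@Dk_ext _ (fun n => ((p ^ j * j`!)%N)%:Z * h j n)) // => n' nk.
  rewrite /h; case: ifP => nd; last by rewrite mulr0.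
  rewrite -PoszM (@prod_ffact p d n' j nd) horner_prod; apply: eq_bigr => i _.
  by rewrite hornerD hornerN hornerX hornerC.
have hB := lemmaB b s (j := j) pp dp hj.
case: (leqP (t + j + V p j) (V p k)) => ta.
  by apply: dvdz_mull; apply: cancel_fact A ta.
case: (leqP (j + V p j) (V p k)) => ja.
  set t2 := (V p k - (j + V p j))%N.
  set t1 := (t - t2)%N.
  have -> : t = (t1 + t2)%N by rewrite /t1 /t2; lia.
  rewrite expnD PoszM; apply: dvdz_mul.
    apply: dvdz_mull; apply: HG; rewrite /t1 /t2.
    have : t%:Z <= Ee p b s j + (V p k)%:Z - j%:Z - (V p j)%:Z by apply: le_trans hB.
    lia.
  apply: cancel_fact A _; rewrite /t2; lia.
apply: dvdz_mulr; apply: dvdz_mull; apply: HG.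
have : t%:Z <= Ee p b s j + (V p k)%:Z - j%:Z - (V p j)%:Z by apply: le_trans hB.
lia.
Qed.

Definition Hf p a r (P : int -> int) (n : nat) : int :=
  if (n %% p ^ a == r)%N then P ((n %/ p ^ a)%N%:Z) else 0.

Lemma InS_ext p b s g h : (forall n, g n = h n) -> InS p b s g -> InS p b s h.
Proof.
move=> E H k t ht; rewrite -(@Dk_ext g h) ?H // => n _; exact: E.
Qed.

Lemma mod_decomp p a x : (0 < p)%N ->
  (x %% (p ^ a.+1) = x %% p + p * ((x %/ p) %% p ^ a))%N.
Proof.
move=> p0.
have e1 := divn_eq x p; have e2 := divn_eq (x %/ p) (p ^ a).
have b1 : (x %% p < p)%N by rewrite ltn_mod.
have b2 : ((x %/ p) %% p ^ a < p ^ a)%N by rewrite ltn_mod expn_gt0 p0.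
set r := (x %% p + p * ((x %/ p) %% p ^ a))%N.
have rb : (r < p ^ a.+1)%N.
  rewrite /r expnS; move: b1 b2; set u := (x %% p)%N; set v := ((x %/ p) %% p ^ a)%N.
  move: (p ^ a)%N => P; nia.
have ex : x = (x %/ p %/ p ^ a * p ^ a.+1 + r)%N.
  rewrite /r expnS {1}e1 {1}e2; ring.
by rewrite {1}ex modnMDl modn_small.
Qed.

Lemma eq_digits p r1 r2 x y : (0 < p)%N -> (r1 < p)%N -> (r2 < p)%N ->
  (r1 + p * x == r2 + p * y)%N = (r1 == r2) && (x == y).
Proof.
move=> p0 h1 h2; apply/eqP/andP => [E|[/eqP -> /eqP ->]] //.
have E1 := congr1 (modn^~ p) E; have E2 := congr1 (divn^~ p) E.
rewrite /= -(modnDmr r1) -(modnDmr r2) !modnMr !addn0 !modn_small // in E1.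
rewrite /= ![(p * _)%N]mulnC ![(_ + _ * p)%N]addnC !divnMDl // !divn_small // !addn0 in E2.
by rewrite E1 E2.
Qed.

Lemma Hf_step p a r P n : prime p -> (r < p ^ a.+1)%N ->
  Hf p a.+1 r P n = DP p (r %% p)%N (Hf p a (r %/ p)%N P) n.
Proof.
move=> pp ra; have p0 := prime_gt0 pp.
rewrite /Hf /DP mod_decomp //.
have er : r = (r %% p + p * ((r %/ p) %% p ^ a))%N.
  by rewrite -mod_decomp // modn_small.
rewrite {1}er eq_digits ?ltn_mod //.
have -> : ((r %/ p) %% p ^ a = r %/ p)%N.
  by rewrite modn_small // ltn_divLR // mulnC -expnS.
case: eqP => //= _; rewrite expnS divnMA.
by [].
Qed.

Definition Pm p l i (M : int) (m : int) : int := ((p ^ l)%N)%:Z * (m + M) ^+ i.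

Lemma base p l i M r : prime p -> (i <= l)%N -> (r < p)%N ->
  InS p 0 0 (Hf p 1 r (Pm p l i M)).
Proof.
move=> pp il rp k t ht.
have ht' : (t <= V p k)%N by move: ht; rewrite /Ee /= V0 subr0 subr0; lia.
set G := (((p ^ (l - i))%N)%:Z)%:P * ('X + (p%:Z * M - r%:Z)%:P) ^+ i.
have := FL G k pp rp.
rewrite -/(V p k) (@Dk_ext _ (Hf p 1 r (Pm p l i M))) => [H|n _].
  apply: dvdz_trans H; rewrite dvdzE /= dvdn_exp2l //.
rewrite /Hf /Pm expn1; case: ifP => // /eqP nr.
have en : n = (n %/ p * p + r)%N by rewrite -nr -divn_eq.
rewrite /G hornerM hornerC horner_exp hornerD hornerX hornerC.
have -> : (p ^ l)%N = (p ^ (l - i) * p ^ i)%N by rewrite -expnD subnK.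
rewrite PoszM !PoszX -mulrA -exprMn; congr (_ * (_ ^+ _)).
have en' : n%:Z = (n %/ p)%N%:Z * p%:Z + r%:Z by rewrite {1}en PoszD PoszM.
rewrite en'; ring.
Qed.

Lemma chain p l i M b : prime p -> (i <= l)%N -> forall r, (r < p ^ b.+1)%N ->
  InS p b (r %% p ^ b)%N (Hf p b.+1 r (Pm p l i M)).
Proof.
move=> pp il; have p0 := prime_gt0 pp.
elim: b => [|b IH] r rb.
  by rewrite expn0 modn1; apply: base => //; rewrite expn1 in rb.
apply: (@InS_ext _ _ _ (DP p (r %% p)%N (Hf p b.+1 (r %/ p)%N (Pm p l i M)))).
  by move=> n; rewrite Hf_step.
rewrite mod_decomp //; apply: step => //; first by rewrite ltn_mod.
apply: IH; rewrite ltn_divLR // mulnC -expnS //.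
Qed.

Lemma V_Fp p b x : prime p ->
  (V p x)%:Z = Fp p b x%:Z + (V p (x %/ p ^ b)%N)%:Z.
Proof.
move=> pp; elim: b x => [|b IH] x; first by rewrite /= expn0 divn1 add0r.
rewrite V_rec // PoszD IH /= divz_nat -divnMA -expnS; ring.
Qed.

Lemma Fp_shift p b : (0 < p)%N ->
  exists G : int, forall x t, Fp p b (x + ((p ^ b)%N)%:Z * t) = Fp p b x + t * G.
Proof.
move=> p0; elim: b => [|b [G IH]]; first by exists 0 => x t; rewrite /= mulr0 addr0.
exists (((p ^ b)%N)%:Z + G) => x t /=.
have -> : x + ((p ^ b.+1)%N)%:Z * t = (((p ^ b)%N)%:Z * t) * p%:Z + x.
  by rewrite expnS PoszM; ring.
rewrite divzMDl ?eqz_nat -?lt0n // [X in Fp _ _ X]addrC IH; ring.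
Qed.

Lemma nat_abs_mod (x : int) (q : nat) : (0 < q)%N -> (`|(x %% q)%Z|%N)%:Z = (x %% q)%Z.
Proof.
move=> q0; rewrite abszE ger0_norm // modz_ge0 // eqz_nat -lt0n //.
Qed.

Lemma lemmaC p b (r : int) k rho s : prime p ->
  rho = `|(r %% (p ^ b)%N)%Z|%N -> s = `|((k%:Z - r) %% (p ^ b)%N)%Z|%N ->
  (logn p ((k %/ p ^ b)`! * 'C(rho + s, rho))%N)%:Z <= Ee p b rho k.
Proof.
move=> pp; set q := (p ^ b)%N => erho es; have p0 := prime_gt0 pp.
have q0 : (0 < q)%N by rewrite expn_gt0 p0.
have hr : rho%:Z = (r %% q)%Z by rewrite erho nat_abs_mod.
have hs : s%:Z = ((k%:Z - r) %% q)%Z by rewrite es nat_abs_mod.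
have rq : (rho < q)%N.
  have : (r %% q)%Z < q%:Z by rewrite ltz_pmod // ltz_nat.
  by rewrite -hr ltz_nat.
have sq : (s < q)%N.
  have : ((k%:Z - r) %% q)%Z < q%:Z by rewrite ltz_pmod // ltz_nat.
  by rewrite -hs ltz_nat.
have Cb : logn p 'C(rho + s, rho) = (V p (rho + s) - V p rho - V p s)%N.
  have := bin_fact (leq_addr s rho); rewrite addKn => E.
  have : V p (rho + s) = (logn p 'C(rho + s, rho) + (V p rho + V p s))%N.
    by rewrite /V -E !lognM ?muln_gt0 ?fact_gt0 ?bin_gt0 ?leq_addr.
  lia.
have Vrs : V p ((rho + s) %/ q) = 0%N.
  have : ((rho + s) %/ q < 2)%N by rewrite ltn_divLR //; lia.
  by case: ((rho + s) %/ q)%N => [|[|]] //=; rewrite /V ?fact0 ?logn1.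
have Vs : V p (s %/ q) = 0%N by rewrite divn_small // V0.
have L1 := V_Fp b k pp; have L2 := V_Fp b (rho + s) pp; have L3 := V_Fp b s pp.
rewrite Vrs in L2; rewrite Vs in L3.
have [G HG] := Fp_shift b p0.
set t := ((k%:Z - rho%:Z) %/ q)%Z.
have ek : k%:Z - rho%:Z = s%:Z + q%:Z * t.
  have ms : ((k%:Z - rho%:Z) %% q)%Z = s%:Z.
    rewrite hs hr; apply/eqP; rewrite eqz_mod_dvd.
    have -> : k%:Z - (r %% q)%Z - (k%:Z - r) = (r %/ q)%Z * q%:Z.
      by rewrite {2}(divz_eq r q); ring.
    exact: dvdz_mull (dvdzz _).
  rewrite {1}(divz_eq (k%:Z - rho%:Z) q) ms -/t; ring.
have ek2 : k%:Z = (rho + s)%N%:Z + q%:Z * t by rewrite PoszD -addrA -ek; ring.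
have F1 := HG (s%:Z) t; have F2 := HG ((rho + s)%N%:Z) t.
rewrite -/q -ek in F1; rewrite -/q -ek2 in F2.
rewrite lognM ?fact_gt0 ?bin_gt0 ?leq_addr // Cb /Ee.
have h1 : (V p rho + V p s <= V p (rho + s))%N.
  have : V p (rho + s) = (logn p 'C(rho + s, rho) + (V p rho + V p s))%N.
    have := bin_fact (leq_addr s rho); rewrite addKn => E.
    by rewrite /V -E !lognM ?muln_gt0 ?fact_gt0 ?bin_gt0 ?leq_addr.
  lia.
rewrite -/q in L1.
have E : ((logn p (k %/ q)`! + (V p (rho + s) - V p rho - V p s))%N)%:Z =
  (V p (k %/ q))%:Z + (V p (rho + s))%:Z - (V p rho)%:Z - (V p s)%:Z.
  rewrite /V in h1 *; lia.
rewrite E; lra.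
Qed.

Definition bfun p alpha (r : int) l (i : nat) (j : nat) : int :=
  if (((p ^ alpha)%N)%:Z %| j%:Z - r)%Z
  then ((p ^ l)%N)%:Z * ((j%:Z - r) %/ ((p ^ alpha)%N)%:Z)%Z ^+ i else 0.

Definition cc p alpha (r : int) k : nat :=
  ((floorp p alpha k)`! *
   'C(fracp p alpha r + fracp p alpha (k%:Z - r), fracp p alpha r))%N.

Lemma KL0 p r l i k : prime p -> (i <= l)%N ->
  (((p ^ logn p (cc p 0 r k))%N)%:Z %| Dk (bfun p 0 r l i) k)%Z.
Proof.
move=> pp il.
have -> : cc p 0 r k = (p * k)`! by rewrite /cc /= bin0 muln1.
set G0 : {poly int} := ('X - r%:P) ^+ i.
rewrite (@Dk_ext _ (fun n => ((p ^ l)%N)%:Z * G0.[n%:Z])); last first.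
  move=> n _; rewrite /bfun expn0 dvd1z divz1 /G0 horner_exp hornerD hornerN hornerX hornerC //.
rewrite Dk_scale.
case: (ltnP i k) => ik.
  by rewrite poly_zero ?mulr0 ?dvdz0 // /G0 size_exp_XsubC.
have -> : logn p (p * k)`! = (k + V p k)%N.
  by rewrite -/(V p (p * k)) V_rec // mulKn ?prime_gt0.
rewrite expnD PoszM; apply: dvdz_mul.
  by rewrite dvdzE /= dvdn_exp2l //; lia.
apply: dvdz_trans (poly_dvd G0 k); exact: pfactor_dvdnn.
Qed.

Lemma mod_mod_pow p b (r : int) : (0 < p)%N ->
  modz (modz r ((p ^ b.+1)%N)%:Z) ((p ^ b)%N)%:Z = modz r ((p ^ b)%N)%:Z.
Proof.
move=> p0; apply/eqP; rewrite eqz_mod_dvd.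
have -> : (r %% ((p ^ b.+1)%N)%:Z)%Z - r = - ((r %/ ((p ^ b.+1)%N)%:Z)%Z * p%:Z) * ((p ^ b)%N)%:Z.
  rewrite {2}(divz_eq r ((p ^ b.+1)%N)%:Z) expnSr PoszM; ring.
exact: dvdz_mull (dvdzz _).
Qed.

Lemma KLS p b r l i k : prime p -> (i <= l)%N ->
  (((p ^ logn p (cc p b.+1 r k))%N)%:Z %| Dk (bfun p b.+1 r l i) k)%Z.
Proof.
move=> pp il; have p0 := prime_gt0 pp.
set Q := (p ^ b.+1)%N.
have Q0 : (0 < Q)%N by rewrite expn_gt0 p0.
set rb := `|(r %% Q%:Z)%Z|%N.
have hrb : rb%:Z = (r %% Q%:Z)%Z by rewrite nat_abs_mod.
have rbQ : (rb < Q)%N.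
  have : (r %% Q%:Z)%Z < Q%:Z by rewrite ltz_pmod // ltz_nat.
  by rewrite -hrb ltz_nat.
set M := - (r %/ Q%:Z)%Z.
have ch := chain (p:=p) (l:=l) (i:=i) M (b:=b) pp il rbQ.
have erho : (rb %% p ^ b)%N = fracp p b.+1 r.
  apply/eqP; rewrite -eqz_nat -modz_nat hrb mod_mod_pow // /fracp nat_abs_mod //.
  by rewrite expn_gt0 p0.
rewrite erho in ch.
rewrite -(@Dk_ext (Hf p b.+1 rb (Pm p l i M))); last first.
  move=> n _; rewrite /Hf /bfun /Pm -/Q.
  have ediv : (Q%:Z %| n%:Z - r)%Z = (n %% Q == rb)%N.
    rewrite -eqz_mod_dvd -eqz_nat -modz_nat hrb //.
  rewrite ediv; case: ifP => // /eqP nq; congr (_ * _ ^+ _).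
  have -> : n%:Z - r = ((n %/ Q)%N%:Z + M) * Q%:Z.
    rewrite {1}(divn_eq n Q) nq PoszD PoszM hrb /M.
    set R := (r %% Q%:Z)%Z; set D := (r %/ Q%:Z)%Z.
    have er : r = D * Q%:Z + R by rewrite /D /R -divz_eq.
    rewrite [X in _ - X]er; ring.
  by rewrite mulzK // eqz_nat -lt0n.
apply: ch; apply: lemmaC => //.
Qed.

Lemma Dk_fsum K (F : 'I_K -> nat -> int) k :
  Dk (fun n => \sum_(i < K) F i n) k = \sum_(i < K) Dk (F i) k.
Proof.
rewrite /Dk; under eq_bigr => j _ do rewrite mulr_sumr.
by rewrite exchange_big.
Qed.

Definition inv p m x : nat := (x ^ (totient (p ^ m)).-1)%N.

Lemma inv_prop p x m : prime p -> coprime p x ->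
  (((p ^ m)%N)%:Z %| (x * inv p m x)%N%:Z - 1)%Z.
Proof.
move=> pp cx; rewrite /inv.
have t0 : (0 < totient (p ^ m))%N by rewrite totient_gt0 expn_gt0 prime_gt0.
rewrite -expnS prednK //.
have cx' : coprime x (p ^ m) by rewrite coprime_sym coprimeXl.
have := Euler_exp_totient cx'.
have x0 : (0 < x)%N.
  by case: x cx {cx'} => //; rewrite /coprime gcdn0 => /eqP p1; move: (prime_gt1 pp); rewrite p1.
have y1 : (1 <= x ^ totient (p ^ m))%N by rewrite expn_gt0 x0.
move/eqP; rewrite eqn_mod_dvd // => H.
by rewrite subzn // dvdzE /=.
Qed.

Lemma rhs_sum p alpha (r : int) l (f : 'I_l.+1 -> padic p) n m :
  (if ((p ^ alpha)%N%:Z %| n%:Z - r)%Z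
   then (p ^ l)%N%:Z * \sum_(i < l.+1) pseq (f i) m * ((n%:Z - r) %/ (p ^ alpha)%N%:Z)%Z ^+ i
   else 0) = \sum_(i < l.+1) pseq (f i) m * bfun p alpha r l i n.
Proof.
rewrite /bfun; case: ifP => _.
  by rewrite mulr_sumr; apply: eq_bigr => i _; ring.
by rewrite big1 // => i _; rewrite mulr0.
Qed.

Lemma KL p alpha r l i k : prime p -> (i <= l)%N ->
  (((p ^ logn p (cc p alpha r k))%N)%:Z %| Dk (bfun p alpha r l i) k)%Z.
Proof. by case: alpha => [|b]; [apply: KL0 | apply: KLS]. Qed.

Theorem theorem1p4 (p alpha : nat) (r : int) (l : nat)
    (f : 'I_l.+1 -> padic p) :
  prime p -> ~ padic_is0 (f ord_max) ->
  exists a : nat -> padic p,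
    forall n m : nat,
      (\sum_(0 <= k < n.+1) coefk p alpha r n k * pseq (a k) m
       = (if ((p ^ alpha)%N%:Z %| n%:Z - r)%Z
          then (p ^ l)%N%:Z *
               \sum_(i < l.+1) pseq (f i) m
                               * ((n%:Z - r) %/ (p ^ alpha)%N%:Z)%Z ^+ i
          else 0) %[mod (p ^ m)%N%:Z])%Z.
Proof.
move=> pp _.
pose c k := cc p alpha r k.
pose v k := logn p (c k).
pose u k := (c k %/ p ^ v k)%N.
have c0 : forall k, (0 < c k)%N.
  by move=> k; rewrite /c /cc muln_gt0 fact_gt0 bin_gt0 leq_addr.
have hc : forall k, c k = (u k * p ^ v k)%N.
  by move=> k; rewrite /u divnK // pfactor_dvdnn.
have cu : forall k, coprime p (u k).
  move=> k; have [w cw ew] := pfactor_coprime pp (c0 k).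
  by rewrite /u -/(v k) {1}ew mulnK // expn_gt0 prime_gt0.
pose E (i : 'I_l.+1) k := (Dk (bfun p alpha r l i) k %/ ((p ^ v k)%N)%:Z)%Z.
have hE : forall (i : 'I_l.+1) k, Dk (bfun p alpha r l i) k = E i k * ((p ^ v k)%N)%:Z.
  by move=> i k; rewrite /E divzK // KL // -ltnS.
pose A k m := \sum_(i < l.+1) pseq (f i) m * E i k.
pose I k m : int := (inv p m (u k))%:Z.
have coh : forall k m, (A k m.+1 * I k m.+1 = A k m * I k m %[mod ((p ^ m)%N)%:Z])%Z.
  move=> k m; apply/eqP; rewrite eqz_mod_dvd.
  have -> : A k m.+1 * I k m.+1 - A k m * I k m =
            A k m.+1 * (I k m.+1 - I k m) + (A k m.+1 - A k m) * I k m by ring.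
  apply: rpredD.
    apply: dvdz_mull.
    have h1 := inv_prop m.+1 pp (cu k); have h2 := inv_prop m pp (cu k).
    have h1' : (((p ^ m)%N)%:Z %| (u k * inv p m.+1 (u k))%N%:Z - 1)%Z.
      apply: dvdz_trans h1; rewrite dvdzE /= dvdn_exp2l //.
    have h3 : (((p ^ m)%N)%:Z %| (u k)%:Z * (I k m.+1 - I k m))%Z.
      have -> : (u k)%:Z * (I k m.+1 - I k m) =
        ((u k * inv p m.+1 (u k))%N%:Z - 1) - ((u k * inv p m (u k))%N%:Z - 1).
        by rewrite /I !PoszM; ring.
      exact: rpredB.
    rewrite Gauss_dvdzr // in h3.
    by rewrite coprimezE /=; apply: coprimeXl.
  apply: dvdz_mulr; rewrite /A -sumrB; apply: rpred_sum => i _.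
  rewrite -mulrBl; apply: dvdz_mulr; rewrite -eqz_mod_dvd; apply/eqP; exact: pcoh.
exists (fun k => @Padic p (fun m => A k m * I k m) (coh k)) => n m /=.
rewrite rhs_sum big_mkord.
rewrite -(inversion (fun j => \sum_(i < l.+1) pseq (f i) m * bfun p alpha r l i j) n).
apply/eqP; rewrite eqz_mod_dvd -sumrB; apply: rpred_sum => k _.
have -> : coefk p alpha r n k = ('C(n, k))%:Z * (-1) ^+ k * (c k)%:Z.
  by rewrite /coefk /c /cc PoszM mulrA.
rewrite (@Dk_fsum _ (fun i j => pseq (f i) m * bfun p alpha r l i j)).
under eq_bigr => i _ do rewrite Dk_scale hE.
have -> : \sum_(i < l.+1) pseq (f i) m * (E i k * ((p ^ v k)%N)%:Z) = A k m * ((p ^ v k)%N)%:Z.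
  by rewrite /A mulr_suml; apply: eq_bigr => i _; ring.
have -> : ('C(n, k))%:Z * (-1) ^+ k * (c k)%:Z * (A k m * I k m) -
          ('C(n, k))%:Z * (-1) ^+ k * (A k m * ((p ^ v k)%N)%:Z) =
          ('C(n, k))%:Z * (-1) ^+ k * (A k m * ((p ^ v k)%N)%:Z) * ((u k)%:Z * I k m - 1).
  by rewrite hc PoszM; ring.
apply: dvdz_mull.
by have := inv_prop m pp (cu k); rewrite PoszM.
Qed.
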